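(* Let $n$ be an even integer and let $x$ be an integer with $6 \leq x \leq n-4$. Let $d$ be the sequence of length $n$ $$d = (n-1,\, n-1,\, n-1,\, \underbrace{x, \ldots, x}_{n-6},\, 3,\, 3,\, 3).$$ Then $d$ is a $3$-factorable graphic sequence, and no realization of $d$ has a connected $3$-factor.
   Context: A finite sequence of nonnegative integers $d = (d_1, \ldots, d_n)$ is graphic if there is a simple graph on vertices $v_1, \ldots, v_n$ with $\deg(v_i) = d_i$ for all $i$; such a graph is a realization of $d$. A $k$-factor of a graph $G$ is a spanning subgraph of $G$ in which every vertex has degree $k$. A graphic sequence $d$ is $k$-factorable if some realization of $d$ contains a $k$-factor. A connected $k$-factor is a $k$-factor that is a connected graph. *)

(* Defs.v *)
From mathcomp Require Import all_boot.
Set Implicit Arguments. Unset Strict Implicit. Unset Printing Implicit Defensive.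

Definition simple_graph (n : nat) (e : rel 'I_n) : Prop :=
  irreflexive e /\ symmetric e.

Definition deg (n : nat) (e : rel 'I_n) (v : 'I_n) : nat := #|[set u | e v u]|.

Definition realization (n : nat) (d : 'I_n -> nat) (e : rel 'I_n) : Prop :=
  simple_graph e /\ forall v, deg e v = d v.

Definition graphic (n : nat) (d : 'I_n -> nat) : Prop :=
  exists e, realization d e.

Definition k_factor (n k : nat) (G F : rel 'I_n) : Prop :=
  simple_graph F /\ subrel F G /\ forall v, deg F v = k.

Definition k_factorable (n k : nat) (d : 'I_n -> nat) : Prop :=
  exists G, realization d G /\ exists F, k_factor k G F.

Definition connected_graph (n : nat) (F : rel 'I_n) : Prop :=
  forall u v, connect F u v.

Definition dseq (n x : nat) (i : 'I_n) : nat :=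
  if i < 3 then n - 1 else if i < n - 3 then x else 3.
Arguments dseq : clear implicits.

(* Main.v *)
Require Import Defs.
From mathcomp Require Import all_boot zify ssralg zmodp.
Import GRing.Theory.

Lemma card_ord_pred n (P : pred nat) :
  #|[set u : 'I_n | P u]| = \sum_(0 <= i < n) P i.
Proof.
rewrite -sum1_card big_mkcond /= big_mkord.
by apply: eq_bigr => i _; rewrite inE; case: (P i).
Qed.

Lemma sum_interval n a b : a <= b -> b <= n ->
  \sum_(0 <= i < n) (a <= i < b) = b - a.
Proof.
move=> ab bn.
rewrite (big_cat_nat _ (n:=a)) //=; last by lia.
rewrite (big_cat_nat _ (m:=a) (n:=b)) //=.
rewrite (eq_big_nat _ _ (F2 := fun=> 0)); last by move=> i /andP [_ H]; lia.
rewrite [X in _ + (X + _)](eq_big_nat _ _ (F2 := fun=> 1)); last by move=> i /andP [H1 H2]; rewrite H1 H2.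
rewrite [X in _ + (_ + X)](eq_big_nat _ _ (F2 := fun=> 0)); last by move=> i /andP [H1 H2]; lia.
rewrite !sum_nat_const_nat; lia.
Qed.

Lemma card_interval n a b : a <= b -> b <= n ->
  #|[set u : 'I_n | a <= u < b]| = b - a.
Proof. by move=> ab bn; rewrite (card_ord_pred n (fun i => a <= i < b)) sum_interval. Qed.

Section Neg.
Variables (n x : nat) (G F : rel 'I_n).
Hypothesis n10 : 10 <= n.
Hypothesis HG : realization (dseq n x) G.
Hypothesis HF : k_factor 3 G F.

Lemma hub_full (v u : 'I_n) : v < 3 -> u != v -> G v u.
Proof.
case: HG => [[irr sym] degs] v3 uv.
have E : [set u | G v u] = [set~ v].
  apply/eqP; rewrite eqEcard; apply/andP; split.
    apply/subsetP => w; rewrite !inE; apply: contraTneq => ->; by rewrite irr.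
  have := degs v; rewrite /deg /dseq v3 => ->.
  rewrite cardsC1 card_ord; lia.
have : u \in [set~ v] by rewrite !inE.
by rewrite -E inE.
Qed.

Lemma low_nbr (v u : 'I_n) : n - 3 <= v -> G v u -> u < 3.
Proof.
case: HG => [[irr sym] degs] vl Gvu.
have E : [set u | G v u] = [set u : 'I_n | 0 <= u < 3].
  apply/eqP; rewrite eq_sym eqEcard; apply/andP; split.
    apply/subsetP => w; rewrite !inE => w3.
    rewrite sym; apply: hub_full => //; apply/eqP => E; subst; lia.
  rewrite card_interval //; last by lia.
  have := degs v; rewrite /deg /dseq => ->.
  have -> : (v < 3) = false by lia.
  by have -> : (v < n - 3) = false by lia.
have : u \in [set u | G v u] by rewrite inE.
by rewrite E inE.
Qed.

Lemma low_F (v h : 'I_n) : n - 3 <= v -> h < 3 -> F v h.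
Proof.
case: HF => [[irr sym] [sub degs]] vl h3.
have E : [set u | F v u] = [set u : 'I_n | 0 <= u < 3].
  apply/eqP; rewrite eqEcard; apply/andP; split.
    apply/subsetP => w; rewrite !inE => Fw.
    by apply: low_nbr vl (sub _ _ Fw).
  rewrite card_interval //; last by lia.
  by have := degs v; rewrite /deg => ->.
have : h \in [set u : 'I_n | 0 <= u < 3] by rewrite inE.
by rewrite -E inE.
Qed.

Lemma hub_F (h u : 'I_n) : h < 3 -> F h u -> n - 3 <= u.
Proof.
case: HF => [[irr sym] [sub degs]] h3 Fhu.
have E : [set u | F h u] = [set u : 'I_n | n - 3 <= u < n].
  apply/eqP; rewrite eq_sym eqEcard; apply/andP; split.
    apply/subsetP => w; rewrite !inE => /andP [w1 _].
    by rewrite sym; apply: low_F.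
  rewrite card_interval //; last by lia.
  by have := degs h; rewrite /deg => ->; lia.
have : u \in [set u | F h u] by rewrite inE.
by rewrite E inE => /andP [].
Qed.

Lemma not_conn : ~ connected_graph F.
Proof.
move=> C.
have [[irr sym] [sub degs]] := HF.
pose S := [set u : 'I_n | (u < 3) || (n - 3 <= u)].
have clS : forall a b, F a b -> a \in S -> b \in S.
  move=> a b Fab; rewrite !inE => /orP [a3|al].
    by rewrite (@hub_F a b a3 Fab) orbT.
  apply/orP; left; apply: (@low_nbr a b al); exact: sub.
have cl : closed F S.
  move=> a b Fab; apply/idP/idP; first exact: clS.
  by apply: clS; rewrite sym.
have h0 : 0 < n by lia.
have m0 : 3 < n by lia.
have := closed_connect cl (C (Ordinal h0) (Ordinal m0)).
rewrite !inE /=.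
have -> : (n - 3 <= 3) = false by lia.
by [].
Qed.
End Neg.

Section Constr.
Variable q : nat.
Local Notation p := q.+1.
Definition V := ('I_3 + (('I_p + 'I_p) + 'I_3))%type.

Definition H (hm : bool) (R : rel 'I_p) (t : nat) (y z : V) : bool :=
  match y, z with
  | inl i, inl j => hm && (i != j)
  | inl _, inr (inl _) => hm
  | inr (inl _), inl _ => hm
  | inl _, inr (inr _) => true
  | inr (inr _), inl _ => true
  | inr (inl (inl a)), inr (inl (inl b)) => R a b
  | inr (inl (inr a)), inr (inl (inr b)) => R a b
  | inr (inl (inl a)), inr (inl (inr b)) => val (b - a)%R < t
  | inr (inl (inr b)), inr (inl (inl a)) => val (b - a)%R < t
  | _, _ => false
  end.

Lemma card_sum (T : finType) (P : pred T) : #|[set z | P z]| = \sum_z P z.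
Proof.
rewrite -sum1_card big_mkcond /=.
by apply: eq_bigr => i _; rewrite inE; case: (P i).
Qed.

Lemma card_sum' (T : finType) (P : pred T) : \sum_z P z = #|[set z | P z]|.
Proof. by rewrite card_sum. Qed.

Lemma sum_shift1 (a : 'I_p) t : t <= p -> \sum_(b : 'I_p) (val (b - a)%R < t) = t.
Proof.
move=> tp; rewrite card_sum'.
have -> : [set b : 'I_p | val (b - a)%R < t] = (fun b : 'I_p => (b - a)%R) @^-1: [set d : 'I_p | 0 <= d < t].
  by apply/setP => b; rewrite !inE.
rewrite card_preimset ?card_interval ?subn0 //.
by move=> b1 b2 /addIr.
Qed.

Lemma sum_shift2 (b : 'I_p) t : t <= p -> \sum_(a : 'I_p) (val (b - a)%R < t) = t.
Proof.
move=> tp; rewrite card_sum'.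
have -> : [set a : 'I_p | val (b - a)%R < t] = (fun a : 'I_p => (b - a)%R) @^-1: [set d : 'I_p | 0 <= d < t].
  by apply/setP => a; rewrite !inE.
rewrite card_preimset ?card_interval ?subn0 //.
by move=> a1 a2 /addrI /oppr_inj.
Qed.

Lemma sum_neq (T : finType) (i : T) : \sum_j (i != j) = #|T|.-1.
Proof.
rewrite card_sum' -(cardsC1 i); apply: eq_card => j; by rewrite !inE eq_sym.
Qed.

Lemma sum_true (T : finType) : \sum_(j : T) true = #|T|.
Proof. by rewrite card_sum'; apply: eq_card => j; rewrite !inE. Qed.

Lemma sum_false (T : finType) : \sum_(j : T) false = 0.
Proof. by rewrite big1. Qed.

Variables (hm : bool) (R : rel 'I_p) (t sigma : nat).
Hypothesis Rdeg : forall a, \sum_b R a b = sigma.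
Hypothesis tp : t <= p.

Lemma deg_hub i : #|[set z | H hm R t (inl i) z]| = (if hm then 2 + (p + p) else 0) + 3.
Proof.
rewrite card_sum !big_sumType /=.
case: hm => /=; rewrite ?sum_neq ?card_ord !big_const_ord !iter_addn /=; lia.
Qed.

Lemma deg_midL a : #|[set z | H hm R t (inr (inl (inl a))) z]| = (if hm then 3 else 0) + sigma + t.
Proof.
rewrite card_sum !big_sumType /= Rdeg sum_shift1 //.
case: hm; rewrite !big_const_ord !iter_addn /=; lia.
Qed.

Lemma deg_midR b : #|[set z | H hm R t (inr (inl (inr b))) z]| = (if hm then 3 else 0) + sigma + t.
Proof.
rewrite card_sum !big_sumType /= Rdeg sum_shift2 //.
case: hm; rewrite !big_const_ord !iter_addn /=; lia.
Qed.

Lemma deg_low l : #|[set z | H hm R t (inr (inr l)) z]| = 3.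
Proof.
rewrite card_sum !big_sumType /=.
rewrite !big_const_ord !iter_addn /=; lia.
Qed.
End Constr.

Section Transport.
Variables (q n x : nat).
Local Notation p := q.+1.
Hypothesis E : n = 3 + ((p + p) + 3).

Definition phi (u : 'I_n) : V q :=
  match split (cast_ord E u) with
  | inl h => inl h
  | inr r => inr (match split r with inl mm => inl (split mm) | inr l => inr l end)
  end.

Definition psi (v : V q) : 'I_n :=
  cast_ord (esym E) (unsplit (match v with
    | inl h => inl h
    | inr r => inr (unsplit (match r with inl mm => inl (unsplit mm) | inr l => inr l end))
    end)).

Lemma phiK : cancel phi psi.
Proof.
move=> u; rewrite /phi /psi.
rewrite -[u in RHS](cast_ordK E); congr (cast_ord _ _).
case: (split (cast_ord E u)) (splitK (cast_ord E u)) => [h|r] <- //=.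
congr (unsplit (inr _)).
case: (split r) (splitK r) => [mm|l] <- //=.
by rewrite splitK.
Qed.

Lemma psiK : cancel psi phi.
Proof.
move=> v; rewrite /phi /psi cast_ordKV unsplitK.
case: v => [h|[mm|l]]; cbv iota beta; rewrite ?unsplitK //.
Qed.

Lemma dseq_phi u : dseq n x u =
  match phi u with inl _ => n - 1 | inr (inl _) => x | inr (inr _) => 3 end.
Proof.
rewrite /phi /dseq; case: splitP => [j Ej|r Er] /=.
  have := ltn_ord j; move: Ej => /= ->; by move=> ->.
case: splitP => [mm Em|l El] /=.
  move: Er Em => /= Er Em.
  have := ltn_ord mm; have := ltn_ord r.
  move=> *; repeat (case: ifP => ?); lia.
move: Er El => /= Er El.
have := ltn_ord l; have := ltn_ord r.
move=> *; repeat (case: ifP => ?); lia.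
Qed.

Definition tr (K : rel (V q)) : rel 'I_n := fun u v => K (phi u) (phi v).

Lemma deg_tr K u : deg (tr K) u = #|[set z | K (phi u) z]|.
Proof.
rewrite /deg -(on_card_preimset (f := phi)); last first.
  by apply: onW_bij; exists psi; [exact: phiK | exact: psiK].
by apply: eq_card => v; rewrite !inE.
Qed.
End Transport.

Section Fin.
Variable q : nat.
Local Notation p := q.+1.

Lemma H_irr hm (R : rel 'I_p) t : irreflexive R -> irreflexive (H q hm R t).
Proof. by move=> Ri [i|[[a|a]|l]] /=; rewrite ?eqxx ?andbF ?Ri. Qed.

Lemma H_sym hm (R : rel 'I_p) t : symmetric R -> symmetric (H q hm R t).
Proof.
move=> Rs [i|[[a|a]|l]] [j|[[b|b]|l']] //=; by rewrite ?(eq_sym i) ?Rs.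
Qed.

Lemma H_sub (R RF : rel 'I_p) t tF : subrel RF R -> tF <= t ->
  subrel (H q false RF tF) (H q true R t).
Proof.
move=> sub le [i|[[a|a]|l]] [j|[[b|b]|l']] //=; try exact: sub.
  by move=> h; apply: leq_trans h le.
by move=> h; apply: leq_trans h le.
Qed.

Definition one : 'I_p := inord 1.
Definition cyc : rel 'I_p := fun a b => ((b - a)%R == one) || ((a - b)%R == one).

Lemma cyc_sym : symmetric cyc.
Proof. by move=> a b; rewrite /cyc orbC. Qed.

Lemma one_neq0 : 0 < q -> one != 0%R.
Proof.
move=> q0; apply/eqP => /(congr1 val) /=.
by rewrite /one inordK.
Qed.

Lemma cyc_irr : 0 < q -> irreflexive cyc.
Proof. by move=> q0 a; rewrite /cyc subrr eq_sym (negbTE (one_neq0 q0)). Qed.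

Lemma cyc_sub : 0 < q -> subrel cyc (fun a b => a != b).
Proof. by move=> q0 a b; apply: contraTneq => ->; rewrite cyc_irr. Qed.

Lemma cyc_deg : 1 < q -> forall a, \sum_b cyc a b = 2.
Proof.
move=> q1 a; rewrite card_sum'.
have -> : [set b | cyc a b] = [set (a + one)%R; (a - one)%R].
  apply/setP => b; rewrite !inE /cyc subr_eq addrC; congr (_ || _).
  apply/eqP/eqP => E.
    by rewrite -E opprB addrC subrK.
  by rewrite E opprB addrC subrK.
rewrite (@cards2 _ (a + one)%R (a - one)%R).
suff -> : (a + one)%R != (a - one)%R by [].
apply/eqP => /addrI /eqP; rewrite -subr_eq0 opprK => /eqP /(congr1 val) /=.
rewrite /one inordK; last lia.
rewrite modn_small; lia.
Qed.
End Fin.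

Lemma construct q n x (R RF : rel 'I_q.+1) t sigma tF sigmaF
  (E : n = 3 + ((q.+1 + q.+1) + 3)) :
  irreflexive R -> symmetric R -> (forall a, \sum_b R a b = sigma) ->
  irreflexive RF -> symmetric RF -> (forall a, \sum_b RF a b = sigmaF) ->
  subrel RF R -> tF <= t -> t <= q.+1 -> 3 + sigma + t = x -> sigmaF + tF = 3 ->
  k_factorable 3 (dseq n x).
Proof.
move=> Ri Rs Rd Fi Fs Fd sub tFt tp ex e3.
have tFp : tF <= q.+1 by apply: leq_trans tp.
exists (tr q n E (H q true R t)); split.
  split; first by split; [move=> u; exact: H_irr | move=> u v; exact: H_sym].
  move=> u; rewrite deg_tr (dseq_phi q n x E); case: (phi q n E u) => [h|[[a|a]|l]].
  - rewrite deg_hub //; lia.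
  - by rewrite (deg_midL _ _ _ _ _ Rd).
  - by rewrite (deg_midR _ _ _ _ _ Rd).
  - by rewrite deg_low.
exists (tr q n E (H q false RF tF)); split.
  by split; [move=> u; exact: H_irr | move=> u v; exact: H_sym].
split; first by move=> u v; apply: H_sub.
move=> u; rewrite deg_tr; case: (phi q n E u) => [h|[[a|a]|l]].
- by rewrite deg_hub.
- by rewrite (deg_midL _ _ _ _ _ Fd).
- by rewrite (deg_midR _ _ _ _ _ Fd).
- by rewrite deg_low.
Qed.

Theorem claim1 (n x : nat) :
  ~~ odd n -> 6 <= x -> x <= n - 4 ->
  graphic (dseq n x) /\ k_factorable 3 (dseq n x) /\
  (forall G : rel 'I_n, realization (dseq n x) G ->
     forall F : rel 'I_n, k_factor 3 G F -> ~ connected_graph F).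
Proof.
move=> Hodd x6 xn.
have n10 : 10 <= n by lia.
have KF : k_factorable 3 (dseq n x).
  have := odd_double_half n; rewrite (negbTE Hodd) add0n -addnn => En.
  pose q := n./2 - 4.
  have E : n = 3 + ((q.+1 + q.+1) + 3) by rewrite /q; lia.
  have neq_irr : irreflexive (fun a b : 'I_q.+1 => a != b) by move=> a; rewrite eqxx.
  have neq_sym : symmetric (fun a b : 'I_q.+1 => a != b) by move=> a b; rewrite eq_sym.
  have neq_deg : forall a : 'I_q.+1, \sum_b (fun a b : 'I_q.+1 => a != b) a b = q.
    by move=> a; rewrite sum_neq card_ord.
  case: (leqP (x - 3) q.+1) => kp.
    apply: (@construct q n x (fun _ _ => false) (fun _ _ => false) (x - 3) 0 3 0 E) => //.
    - by move=> a; rewrite sum_false.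
    - by move=> a; rewrite sum_false.
    - lia.
    - lia.
  case: (leqP 2 q) => q2.
    apply: (@construct q n x _ (@cyc q) (x - 3 - q) q 1 2 E neq_irr neq_sym neq_deg) => //.
    - apply: cyc_irr; lia.
    - exact: cyc_sym.
    - exact: cyc_deg.
    - apply: cyc_sub; lia.
    - lia.
    - lia.
    - lia.
  apply: (@construct q n x _ _ 2 q 2 q E neq_irr neq_sym neq_deg neq_irr neq_sym neq_deg) => //; lia.
split; first by case: KF => G [HG _]; exists G.
split; first by [].
move=> G HG F HF; exact: (@not_conn n x G F n10 HG HF).
Qed.
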